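(* Assume $x=0$ and let $c_6=313600/s$. Let $u_{t_5}$ be a configuration of protocol $P_o$ at time $t_5$ such that $a_{j,t_5}\le c_6/n$ and $a_{j+1,t_5}>s/40$ for some $j\in\{1,2,3\}$ (indices modulo 3). Then, with probability at least a positive constant independent of $n$, for some $t_6=t_5+O(n)$ a configuration $u_{t_6}$ is reached with $a_{\min,t_6}=0$.
   Context: Population protocol model: $n$ agents; in each step a scheduler picks an ordered pair (initiator, receiver) of distinct agents uniformly at random; rules written $A:B\mapsto C$ mean an initiator in state $A$ turns a receiver in state $B$ into $C$ (initiator unchanged). Time is counted in steps. Protocol $P_o$ has a source state $X$ (never changed) and states $A_i^+,A_i^{++}$, $i\in\{1,2,3\}$, indices modulo 3, $A_i^?$ denoting either flavor. Rules for each $i$: (1) $A_i^?:A_i^?\mapsto A_i^{++}$; (2) $A_i^?:A_{i+1}^?\mapsto A_{i+1}^+$; (3) $A_i^+:A_{i-1}^?\mapsto A_i^+$ w.p. $p$, else $A_{i-1}^+$; (4) $A_i^{++}:A_{i-1}^?\mapsto A_i^+$ w.p. $2p$, else $A_{i-1}^+$; (5) $X:A_j^?\mapsto A_\ell^+$, $\ell$ uniform in $\{1,2,3\}$. Here $p>0$ is a sufficiently small constant. Notation: $x=\#X/n$, $a_i=(\#A_i^++\#A_i^{++})/n$, $s=a_1+a_2+a_3$, $a_{\min}=\min_i a_i$; subscript $t$ denotes the value at step $t$. *)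

(* Defs.v *)
(* population protocol P_o as an explicit finite Markov chain
   on configurations (counts of agents per state). *)
From mathcomp Require Import all_boot all_order all_algebra.
From mathcomp Require Import reals.
Set Implicit Arguments. Unset Strict Implicit. Unset Printing Implicit Defensive.
Import Order.TTheory GRing.Theory Num.Theory.
Local Open Scope ring_scope.

(* Agent states: None = source X; Some (i, false) = A_i^+; Some (i, true) = A_i^++.
   Indices i : 'I_3 (modulo 3); i+1 is [ordS i], i-1 is [ord_pred i]. *)
Definition state := option ('I_3 * bool).

Definition config := {ffun state -> nat}.

Definition popsize (u : config) : nat := \sum_(q : state) u q.

Definition cntA (u : config) (i : 'I_3) : nat := u (Some (i, false)) + u (Some (i, true)).

Section Fracs.
Variable R : realType.
Definition xfrac (u : config) : R := (u None)%:R / (popsize u)%:R.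
Definition afrac (u : config) (i : 'I_3) : R := (cntA u i)%:R / (popsize u)%:R.
Definition sfrac (u : config) : R := \sum_(i : 'I_3) afrac u i.
(* c_6 = 313600 / s  (313600 = 560^2, written so to avoid a huge unary nat literal) *)
Definition c6 (u : config) : R := (560%:R ^+ 2) / sfrac u.
Definition amin_zero (u : config) : bool := [exists i : 'I_3, cntA u i == 0%N].

(* Outcome distribution of an interaction: initiator in state a, receiver in state b;
   list of (probability, new state of the receiver). The initiator is unchanged. *)
Definition rule (p : R) (a b : state) : seq (R * state) :=
  match a, b with
  | None, Some _ => [seq (1 / 3, Some (l, false)) | l <- enum 'I_3]
  | Some (i, fa), Some (k, fb) =>
      if k == i then [:: (1, Some (i, true))]
      else if k == ordS i then [:: (1, Some (ordS i, false))]
      else (* k = i - 1 *)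
        let q := if fa then 2 * p else p in
        [:: (q, Some (i, false)); (1 - q, Some (k, false))]
  | _, None => [:: (1, None)]
  end.

(* Probability that the scheduler picks an (initiator, receiver) pair of agents
   in states (a, b): uniform over ordered pairs of distinct agents. *)
Definition pairw (u : config) (a b : state) : R :=
  (u a * (u b - (a == b)))%:R / (popsize u * (popsize u).-1)%:R.

Definition upd (u : config) (b c : state) : config :=
  [ffun q => (u q - (q == b) + (q == c))%N].

Fixpoint reach_prob (p : R) (T : nat) (u : config) : R :=
  if amin_zero u then 1 else
  match T with
  | 0%N => 0
  | T'.+1 => \sum_(a : state) \sum_(b : state)
               pairw u a b * \sum_(oc <- rule p a b) oc.1 * reach_prob p T' (upd u b oc.2)
  end.
End Fracs.

(* Main.v *)
Require Import Defs.
From mathcomp Require Import all_boot all_order all_algebra.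
From mathcomp Require Import reals.
From mathcomp Require Import ring lra zify.
Import Order.TTheory GRing.Theory Num.Theory.
Local Open Scope ring_scope.

Lemma sum_opt (V : nmodType) (T : finType) (F : option T -> V) :
  \sum_(q : option T) F q = F None + \sum_(x : T) F (Some x).
Proof.
rewrite (bigD1 None) //=; congr (_ + _).
rewrite (reindex_omap Some id) /=; last by case.
by apply: eq_bigl => x; rewrite eqxx.
Qed.

Lemma sum_optn (T : finType) (F : option T -> nat) :
  (\sum_(q : option T) F q = F None + \sum_(x : T) F (Some x))%N.
Proof.
rewrite (bigD1 None) //=; congr (_ + _).
rewrite (reindex_omap Some id) /=; last by case.
by apply: eq_bigl => x; rewrite eqxx.
Qed.

Lemma I3f1 (j : 'I_3) : (ordS j == j) = false. Proof. by case: j => [[|[|[|?]]] ?]. Qed.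
Lemma I3f2 (j : 'I_3) : (j == ordS j) = false. Proof. by case: j => [[|[|[|?]]] ?]. Qed.
Lemma I3f3 (j : 'I_3) : (ord_pred j == j) = false. Proof. by case: j => [[|[|[|?]]] ?]. Qed.
Lemma I3f4 (j : 'I_3) : (j == ord_pred j) = false. Proof. by case: j => [[|[|[|?]]] ?]. Qed.
Lemma I3f5 (j : 'I_3) : (ordS j == ord_pred j) = false. Proof. by case: j => [[|[|[|?]]] ?]. Qed.
Lemma I3f6 (j : 'I_3) : (ord_pred j == ordS j) = false. Proof. by case: j => [[|[|[|?]]] ?]. Qed.

Lemma I3facts2 (j : 'I_3) : ordS (ordS j) = ord_pred j /\ ordS (ord_pred j) = j.
Proof. by case: j => [[|[|[|?]]] ?] //; split; apply: val_inj. Qed.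

Lemma I3cases (j i : 'I_3) : [\/ i = j, i = ordS j | i = ord_pred j].
Proof.
case: j i => [[|[|[|?]]] Hj] [[|[|[|?]]] Hi] //.
all: try (by apply: Or31; apply: val_inj).
all: try (by apply: Or32; apply: val_inj).
all: try (by apply: Or33; apply: val_inj).
Qed.

Lemma sum3 (V : nmodType) (j : 'I_3) (F : 'I_3 -> V) :
  \sum_(i < 3) F i = F j + F (ordS j) + F (ord_pred j).
Proof.
rewrite !big_ord_recr big_ord0 /= add0r.
case: j => [[|[|[|?]]] Hj] //.
- by f_equal; [f_equal|]; f_equal; apply: val_inj.
- rewrite [RHS]addrC addrA.
  by f_equal; [f_equal|]; f_equal; apply: val_inj.
- rewrite -[RHS]addrA [RHS]addrC.
  by f_equal; [f_equal|]; f_equal; apply: val_inj.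
Qed.
Definition gam (R : realType) (p : R) : R := p / 160.
Arguments gam {R}.
Definition hfun (R : realType) (p : R) (n k T : nat) : R :=
  gam p ^+ k * ((T - k)%:R / n%:R) ^+ k.
Arguments hfun {R}.
Definition psi (R : realType) (p : R) (n m T : nat) : R :=
  Num.max 0 (m%:R - n%:R / 80 - 3 * p * T%:R) / n%:R.

Arguments psi {R}.

Lemma pow_diff {R : realType} {a b : R} k :
  0 <= b -> b <= a -> a ^+ k.+1 - b ^+ k.+1 <= k.+1%:R * (a - b) * a ^+ k.
Proof.
move=> b0 ba; elim: k => [|k IH]; first by rewrite !expr1 expr0 mulr1 mul1r.
have a0 : 0 <= a by exact: le_trans b0 ba.
have bk : b ^+ k.+1 <= a ^+ k.+1 by apply: lerXn2r.
have -> : a ^+ k.+2 - b ^+ k.+2 = a * (a ^+ k.+1 - b ^+ k.+1) + (a - b) * b ^+ k.+1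
  by rewrite !exprS; ring.
have -> : k.+2%:R * (a - b) * a ^+ k.+1 = a * (k.+1%:R * (a - b) * a ^+ k) + (a - b) * a ^+ k.+1.
  have -> : (k.+2)%:R = k.+1%:R + 1 :> R by rewrite natr1.
  by rewrite !exprS; ring.
apply: lerD; first by apply: ler_wpM2l.
by apply: ler_wpM2l => //; rewrite subr_ge0.
Qed.

Section S.
End S.

Lemma gam_ge0 {R : realType} {p : R} : 0 <= p -> 0 <= gam p.
Proof. by move=> p0; rewrite /gam divr_ge0. Qed.

Lemma gam_le1 {R : realType} {p : R} : p <= 1 -> gam p <= 1.
Proof. by move=> p1; rewrite /gam; lra. Qed.

Lemma hfun_ge0 {R : realType} (p : R) n k T : 0 <= p -> 0 <= hfun p n k T.
Proof.
move=> p0; rewrite /hfun mulr_ge0 // exprn_ge0 // ?gam_ge0 // divr_ge0 //.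
Qed.

Lemma ratio_le1 {R : realType} (x n : nat) : (x <= n)%N -> 0 <= x%:R / n%:R :> R /\ x%:R / n%:R <= 1 :> R.
Proof.
move=> xn; split; first by rewrite divr_ge0.
case: n xn => [|n] xn; first by rewrite invr0 mulr0.
by rewrite ler_pdivrMr ?ltr0Sn // mul1r ler_nat.
Qed.

Lemma hfun_le1 {R : realType} (p : R) n k T : 0 <= p -> p <= 1 -> (T <= n)%N -> hfun p n k T <= 1.
Proof.
move=> p0 p1 Tn; rewrite /hfun.
have [r0 r1] := @ratio_le1 R (T - k) n ltac:(lia).
rewrite -[X in _ <= X](mulr1 1); apply: ler_pM; rewrite ?exprn_ge0 ?gam_ge0 //.
  by apply: exprn_ile1; [exact: gam_ge0 | exact: gam_le1].
exact: exprn_ile1.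
Qed.

Lemma hfun_le {R : realType} (p : R) n k T : 0 <= p -> p <= 1 -> (T < n)%N ->
  hfun p n k.+1 T <= gam p * hfun p n k T.
Proof.
move=> p0 p1 Tn; rewrite /hfun.
have [b0 b1] := @ratio_le1 R (T - k.+1) n ltac:(lia).
have [a0 a1] := @ratio_le1 R (T - k) n ltac:(lia).
have ba : (T - k.+1)%:R / n%:R <= (T - k)%:R / n%:R :> R.
  by apply: ler_wpM2r; rewrite ?invr_ge0 // ler_nat; lia.
set a := (T - k)%:R / n%:R in a0 a1 ba *.
set b := (T - k.+1)%:R / n%:R in b0 b1 ba *.
have g0 := gam_ge0 p0.
have -> : gam p ^+ k.+1 * b ^+ k.+1 = gam p * (b * (gam p ^+ k * b ^+ k)) by rewrite !exprS; ring.
apply: ler_wpM2l => //.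
rewrite -[X in _ <= X]mul1r; apply: ler_pM; rewrite ?mulr_ge0 ?exprn_ge0 ?invr_ge0 //.
apply: ler_wpM2l; rewrite ?exprn_ge0 //.
by apply: lerXn2r; rewrite ?nnegrE.
Qed.

Lemma hfun_step {R : realType} (p : R) n k T : 0 <= p -> p <= 1 -> (T < n)%N ->
  hfun p n k.+1 T.+1 - hfun p n k.+1 T <= gam p * k.+1%:R / n%:R * hfun p n k T.
Proof.
move=> p0 p1 Tn; rewrite /hfun subSS.
have [b0 b1] := @ratio_le1 R (T - k.+1) n ltac:(lia).
have [a0 a1] := @ratio_le1 R (T - k) n ltac:(lia).
have ba : (T - k.+1)%:R / n%:R <= (T - k)%:R / n%:R :> R.
  by apply: ler_wpM2r; rewrite ?invr_ge0 // ler_nat; lia.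
have d1 : (T - k)%:R / n%:R - (T - k.+1)%:R / n%:R <= 1 / n%:R :> R.
  rewrite -mulrBl; apply: ler_wpM2r; rewrite ?invr_ge0 //.
  rewrite lerBlDl natr1 ler_nat; lia.
set a := (T - k)%:R / n%:R in a0 a1 ba d1 *.
set b := (T - k.+1)%:R / n%:R in b0 b1 ba d1 *.
have g0 := gam_ge0 p0.
rewrite -mulrBr.
have := pow_diff k b0 ba => H.
apply: (le_trans (ler_wpM2l (exprn_ge0 _ g0) H)).
have -> : gam p * k.+1%:R / n%:R * (gam p ^+ k * a ^+ k) =
   gam p ^+ k.+1 * (k.+1%:R * (1 / n%:R) * a ^+ k) by rewrite exprS; ring.
apply: ler_wpM2l; first exact: exprn_ge0.
apply: ler_wpM2r; first exact: exprn_ge0.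
by apply: ler_wpM2l.
Qed.

Lemma psi_ge0 {R : realType} (p : R) n m T : 0 <= psi p n m T.
Proof. by rewrite /psi divr_ge0 // le_max lexx. Qed.

Lemma psi_le1 {R : realType} (p : R) n m T : 0 <= p -> (m <= n)%N -> psi p n m T <= 1.
Proof.
move=> p0 mn; rewrite /psi.
case: n mn => [|n] mn; first by rewrite invr0 mulr0.
rewrite ler_pdivrMr ?ltr0Sn // mul1r ge_max ler0n /=.
have : m%:R <= n.+1%:R :> R by rewrite ler_nat.
have : 0 <= p * T%:R by rewrite mulr_ge0.
have : 0 <= n.+1%:R / 80 :> R by rewrite divr_ge0.
lra.
Qed.

Lemma psi_mono {R : realType} (p : R) n m1 m2 T : (m1 <= m2)%N -> psi p n m1 T <= psi p n m2 T.
Proof.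
move=> m12; rewrite /psi; apply: ler_wpM2r; rewrite ?invr_ge0 //.
rewrite ge_max le_max lexx /= le_max; apply/orP; right.
by rewrite lerD2r lerD2r ler_nat.
Qed.

Lemma psi_pos {R : realType} (p : R) n m T : 0 <= p -> 0 < psi p n m T.+1 -> n%:R / 80 < m%:R :> R.
Proof.
move=> p0; rewrite /psi.
case: (leP (m%:R - n%:R / 80 - 3 * p * T.+1%:R) 0) => [H|H].
  by rewrite mul0r ltxx.
move=> _; have : 0 <= 3 * p * T.+1%:R by rewrite !mulr_ge0.
lra.
Qed.

Lemma psi_step {R : realType} (p : R) n m T Cc : 0 < p -> 0 <= Cc -> Cc <= 3 * p ->
  0 < psi p n m T.+1 -> psi p n m T.+1 <= psi p n m T - Cc * (psi p n m T - psi p n m.-1 T).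
Proof.
move=> p0 C0 C3 Hpos.
have mpos := @psi_pos R p n m T (ltW p0) Hpos.
have m1 : (0 < m)%N.
  rewrite lt0n; apply/eqP => m0; move: mpos; rewrite m0 ltNge divr_ge0 //.
move: Hpos; rewrite /psi.
set f := m%:R - n%:R / 80 - 3 * p * T%:R.
have ET : T.+1%:R = T%:R + 1 :> R by rewrite natr1.
have -> : m%:R - n%:R / 80 - 3 * p * T.+1%:R = f - 3 * p by rewrite ET /f; ring.
have EM : m%:R = m.-1%:R + 1 :> R by rewrite natr1 prednK.
have -> : m.-1%:R - n%:R / 80 - 3 * p * T%:R = f - 1 by rewrite /f EM; ring.
set ni := n%:R^-1.
have ni0 : 0 <= ni by rewrite /ni invr_ge0.
case: (leP (f - 3 * p) 0) => [H|H]; first by rewrite mul0r ltxx.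
move=> _.
have -> : Num.max 0 f = f by rewrite max_r //; lra.
have -> : f * ni - Cc * (f * ni - Num.max 0 (f - 1) * ni) = (f - Cc * (f - Num.max 0 (f - 1))) * ni by ring.
apply: ler_wpM2r => //.
case: (leP (f - 1) 0) => H1.
  rewrite subr0.
  have : Cc * f <= 3 * p by nra.
  lra.
lra.
Qed.

Lemma combine (R : realFieldType) (h h' hm ps ps' psm D B Cc g e : R) :
  0 <= e -> 0 <= h -> 0 <= h' -> 0 <= hm -> h' - h <= e * hm -> h <= g * hm ->
  0 <= psm -> psm <= ps -> 0 <= ps' -> 0 <= D -> 0 <= B -> 0 <= Cc -> D + B + Cc <= 1 ->
  (0 < ps' -> e + g * (D + B) <= D /\ ps' <= ps - Cc * (ps - psm)) ->
  h' * ps' <= h * ps + D * ((hm - h) * ps) - B * (h * ps) + Cc * (h * (psm - ps)).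
Proof.
move=> e0 h0 h'0 hm0 H1 H2 psm0 psmps ps'0 D0 B0 C0 DBC Hpos.
have RHSe : h * ps + D * ((hm - h) * ps) - B * (h * ps) + Cc * (h * (psm - ps))
   = h * ps * (1 - D - B - Cc) + D * hm * ps + Cc * h * psm by ring.
case: (ltrP 0 ps') => [ps'p|ps'n].
  have [Hk Hps] := Hpos ps'p.
  set H := h + D * (hm - h) - B * h.
  set Ps := ps - Cc * (ps - psm).
  have Hh : h' <= H.
    have f1 : (D + B) * h <= (D + B) * (g * hm) by apply: ler_wpM2l => //; lra.
    have f2 : e * hm + g * (D + B) * hm <= D * hm by rewrite -mulrDl; apply: ler_wpM2r.
    have -> : H = h + D * hm - (D + B) * h by rewrite /H; ring.
    rewrite -subr_ge0.
    have -> : h + D * hm - (D + B) * h - h' = (e * hm - (h' - h)) + (D * hm - (e * hm + g * (D + B) * hm)) + ((D + B) * (g * hm) - (D + B) * h) by ring.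
    by apply: addr_ge0; [apply: addr_ge0|]; rewrite subr_ge0.
  have HPs : 0 <= Ps by exact: le_trans ps'0 Hps.
  have step1 : h' * ps' <= H * Ps.
    apply: (le_trans (ler_wpM2l h'0 Hps)); apply: ler_wpM2r => //.
  have HH : B * h <= D * (hm - h).
    have f1 : (D + B) * h <= (D + B) * (g * hm) by apply: ler_wpM2l => //; lra.
    have f2 : g * (D + B) * hm <= D * hm.
      apply: ler_wpM2r => //.
      move: Hk; set X := g * (D + B); lra.
    rewrite -subr_ge0.
    have -> : D * (hm - h) - B * h = (D * hm - g * (D + B) * hm) + ((D + B) * (g * hm) - (D + B) * h) by ring.
    by apply: addr_ge0; rewrite subr_ge0.
  apply: (le_trans step1).
  have -> : h * ps + D * ((hm - h) * ps) - B * (h * ps) + Cc * (h * (psm - ps))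
     = H * Ps + Cc * (ps - psm) * (D * (hm - h) - B * h) by rewrite /H /Ps; ring.
  rewrite lerDl; apply: mulr_ge0; [apply: mulr_ge0 => //; lra | lra].
have -> : ps' = 0 by apply/eqP; rewrite eq_le ps'n ps'0.
rewrite mulr0 RHSe.
apply: addr_ge0; [apply: addr_ge0|]; apply: mulr_ge0 => //; try apply: mulr_ge0 => //; lra.
Qed.

Lemma frac_le {R : realType} (c : R) (x N : nat) : 0 <= c -> (x <= N)%N -> c * x%:R / N%:R <= c.
Proof.
move=> c0 xN; case: N xN => [|N] xN; first by rewrite invr0 mulr0.
rewrite ler_pdivrMr ?ltr0Sn //; apply: ler_wpM2l => //; by rewrite ler_nat.
Qed.

Lemma core {R : realType} (p : R) n k m l T : 0 < p -> p <= 1 / 1000 -> (3 <= n)%N -> (0 < k)%N ->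
  (k + m + l = n)%N -> (T < n)%N ->
  hfun p n k T.+1 * psi p n m T.+1 <=
  hfun p n k T * psi p n m T
  + (p * (k * m)%:R / (n * n.-1)%:R) * ((hfun p n k.-1 T - hfun p n k T) * psi p n m T)
  - (2 * p * (k * l)%:R / (n * n.-1)%:R) * (hfun p n k T * psi p n m T)
  + (2 * p * (l * m)%:R / (n * n.-1)%:R) * (hfun p n k T * (psi p n m.-1 T - psi p n m T)).
Proof.
move=> p0 p1 n3 k0 kml Tn.
case: k k0 kml => // k _ kml /=.
have n0 : (0 < n)%N by lia.
have Hml : ((m + l).+1 <= n)%N by lia.
have p0' : 0 <= p by exact: ltW.
have p1' : p <= 1 by lra.
have HN : (0 < n * n.-1)%N by rewrite muln_gt0; apply/andP; split; lia.
have km : (k.+1 * m <= n * n.-1)%N by apply: leq_mul; lia.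
have kl : (k.+1 * l <= n * n.-1)%N by apply: leq_mul; lia.
have lm : (l * m <= n * n.-1)%N by rewrite mulnC; apply: leq_mul; lia.
have Dle : p * (k.+1 * m)%:R / (n * n.-1)%:R <= p by apply: frac_le.
have Ble : 2 * p * (k.+1 * l)%:R / (n * n.-1)%:R <= 2 * p by apply: frac_le => //; lra.
have Cle : 2 * p * (l * m)%:R / (n * n.-1)%:R <= 2 * p by apply: frac_le => //; lra.
have D0 : 0 <= p * (k.+1 * m)%:R / (n * n.-1)%:R by rewrite !mulr_ge0 ?invr_ge0.
have B0 : 0 <= 2 * p * (k.+1 * l)%:R / (n * n.-1)%:R by rewrite !mulr_ge0 ?invr_ge0 //; lra.
have C0 : 0 <= 2 * p * (l * m)%:R / (n * n.-1)%:R by rewrite !mulr_ge0 ?invr_ge0 //; lra.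
apply: (@combine R _ _ _ _ _ _ _ _ _ (gam p) (gam p * k.+1%:R / n%:R)).
- by rewrite !mulr_ge0 ?invr_ge0 ?gam_ge0.
- exact: hfun_ge0.
- exact: hfun_ge0.
- exact: hfun_ge0.
- by apply: hfun_step.
- by apply: hfun_le.
- exact: psi_ge0.
- by apply: psi_mono; apply: leq_pred.
- exact: psi_ge0.
- exact: D0.
- exact: B0.
- exact: C0.
- lra.
move=> Hpos; split; last by apply: psi_step => //; apply: le_trans Cle _; lra.
have mpos := @psi_pos R p n m T p0' Hpos.
have Eq : (n * n.-1)%:R = n%:R * (n%:R - 1) :> R.
  by rewrite natrM -subn1 natrB.
have ML : m%:R + l%:R <= n%:R - 1 :> R.
  move: Hml; rewrite -(ler_nat R) -natr1 natrD => H; lra.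
have nR3 : 3 <= n%:R :> R by rewrite (ler_nat R 3 n).
rewrite Eq !natrM.
clear Dle Ble Cle D0 B0 C0 km kl lm HN Hpos Eq.
set nR := n%:R in mpos ML nR3 *.
set K := k.+1%:R.
set M := m%:R in mpos ML *.
set L := l%:R in ML *.
have K0 : 0 < K by rewrite /K ltr0Sn.
have M0 : 0 <= M by rewrite /M ler0n.
have L0 : 0 <= L by rewrite /L ler0n.
have q0 : 0 < nR - 1 by lra.
have nR0 : nR != 0 by apply/eqP; lra.
have q0' : nR - 1 != 0 by apply/eqP; lra.
have -> : gam p * K / nR + gam p * (p * (K * M) / (nR * (nR - 1)) + 2 * p * (K * L) / (nR * (nR - 1)))
   = (p * K / (nR * (nR - 1))) * ((nR - 1) / 160 + p * (M + 2 * L) / 160).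
  by rewrite /gam; field; apply/andP; split.
have -> : p * (K * M) / (nR * (nR - 1)) = (p * K / (nR * (nR - 1))) * M.
  by field; apply/andP; split.
apply: ler_wpM2l; first by rewrite !mulr_ge0 // invr_ge0 mulr_ge0 //; lra.
have H : p * (M + 2 * L) <= 1 / 1000 * (2 * (nR - 1)).
  by apply: ler_pM => //; lra.
lra.
Qed.

Lemma sum3n (j : 'I_3) (F : 'I_3 -> nat) :
  (\sum_(i < 3) F i = F j + F (ordS j) + F (ord_pred j))%N.
Proof.
rewrite !big_ord_recr big_ord0 /= add0n.
case: j => [[|[|[|?]]] Hj] //.
- by f_equal; [f_equal|]; f_equal; apply: val_inj.
- rewrite [RHS]addnC addnA.
  by f_equal; [f_equal|]; f_equal; apply: val_inj.
- rewrite -[RHS]addnA [RHS]addnC.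
  by f_equal; [f_equal|]; f_equal; apply: val_inj.
Qed.

Lemma popsize_dec (u : config) : popsize u = (u None + \sum_(i < 3) cntA u i)%N.
Proof.
rewrite /popsize sum_optn; congr addn.
have -> : (\sum_(x : 'I_3 * bool) u (Some x) = \sum_(x : 'I_3 * bool) u (Some (x.1, x.2)))%N
  by apply: eq_bigr => -[].
rewrite -(pair_bigA _ (fun i b => u (Some (i, b)))).
by apply: eq_bigr => i _; rewrite big_bool /= addnC.
Qed.

Lemma upd_None (u : config) x y : upd u (Some x) (Some y) None = u None.
Proof. by rewrite /upd ffunE /= subn0 addn0. Qed.

Lemma eqSome (T : eqType) (x y : T) : (Some x == Some y) = (x == y).
Proof. by []. Qed.

Lemma cntA_upd (u : config) ib fb ic fc i : (0 < u (Some (ib, fb)))%N ->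
  (cntA (upd u (Some (ib, fb)) (Some (ic, fc))) i + (ib == i) = cntA u i + (ic == i))%N.
Proof.
move=> ub; rewrite /cntA /upd !ffunE !eqSome !xpair_eqE.
rewrite [ib == i]eq_sym [ic == i]eq_sym.
case: (eqVneq i ib) => [Hb|nb]; case: (eqVneq i ic) => [Hc|nc]; subst;
  rewrite ?eqxx ?(negbTE nb) ?(negbTE nc) /=;
  case: fb ub; case: fc => ub /=; try lia.
all: try (move: ub; set X := u (Some _); move=> ub; lia).
Qed.

Lemma sum_eqi (ib : 'I_3) : (\sum_(i < 3) (ib == i) = 1)%N.
Proof. by rewrite (sum3n ib) eqxx I3f2 I3f4. Qed.

Lemma popsize_upd (u : config) ib fb ic fc : (0 < u (Some (ib, fb)))%N ->
  popsize (upd u (Some (ib, fb)) (Some (ic, fc))) = popsize u.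
Proof.
move=> ub; rewrite !popsize_dec upd_None; congr addn.
have H : (\sum_(i < 3) (cntA (upd u (Some (ib, fb)) (Some (ic, fc))) i + (ib == i))
   = \sum_(i < 3) (cntA u i + (ic == i)))%N by apply: eq_bigr => i _; apply: cntA_upd.
move: H; rewrite !big_split /= !sum_eqi; lia.
Qed.

Lemma pairw_ge0 {R : realType} (u : config) a b : 0 <= pairw R u a b.
Proof. by rewrite /pairw divr_ge0. Qed.

Lemma pairw_nz {R : realType} (u : config) a b : pairw R u a b != 0 -> (0 < u a)%N /\ (0 < u b)%N.
Proof.
rewrite /pairw; case: (posnP (u a)) => [->|ua]; first by rewrite mul0n mul0r eqxx.
case: (posnP (u b)) => [->|ub]; first by rewrite sub0n muln0 mul0r eqxx.
by [].
Qed.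

Lemma sum_pairw_nat (u : config) :
  (\sum_a \sum_b (u a * (u b - (a == b))) = popsize u * (popsize u).-1)%N.
Proof.
rewrite /popsize big_distrl /=; apply: eq_bigr => a _.
rewrite -big_distrr /=; case: (posnP (u a)) => [->|ua]; first by rewrite !mul0n.
congr muln.
rewrite (bigD1 a) //= eqxx [X in _ = X.-1](bigD1 a) //=.
have -> : (\sum_(i | i != a) (u i - (a == i)) = \sum_(i | i != a) u i)%N.
  by apply: eq_bigr => i ia; rewrite eq_sym (negbTE ia) subn0.
set S := (\sum_(i | i != a) u i)%N; lia.
Qed.

Lemma sum_pairw {R : realType} (u : config) : (2 <= popsize u)%N ->
  \sum_a \sum_b pairw R u a b = 1.
Proof.
move=> n2; rewrite /pairw.
have -> : \sum_a \sum_b (u a * (u b - (a == b)))%:R / (popsize u * (popsize u).-1)%:R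
   = (\sum_a \sum_b (u a * (u b - (a == b))))%N%:R / (popsize u * (popsize u).-1)%:R :> R.
  rewrite natr_sum mulr_suml; apply: eq_bigr => a _.
  by rewrite natr_sum mulr_suml.
rewrite sum_pairw_nat divff // pnatr_eq0 muln_eq0 negb_or; apply/andP; split; apply/eqP; lia.
Qed.

Definition Ind {R : realType} (q : state) (i : 'I_3) : R :=
  if q is Some (i', _) then (i' == i)%:R else 0.

Lemma sum_Ind {R : realType} (u : config) i :
  \sum_q (u q)%:R * Ind q i = (cntA u i)%:R :> R.
Proof.
rewrite sum_opt /= mulr0 add0r.
have -> : \sum_(x : 'I_3 * bool) (u (Some x))%:R * Ind (Some x) i
   = \sum_(x : 'I_3 * bool) (u (Some (x.1, x.2)))%:R * Ind (Some (x.1, x.2)) i :> R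
  by apply: eq_bigr => -[].
rewrite -(pair_bigA _ (fun a b => (u (Some (a, b)))%:R * Ind (Some (a, b)) i)) /=.
by rewrite (sum3 _ i) /= !big_bool /= eqxx I3f1 I3f3 !mulr0 !addr0 !mulr1 /cntA natrD addrC.
Qed.

Lemma S_pair {R : realType} (u : config) i1 i2 : i1 != i2 ->
  \sum_a \sum_b pairw R u a b * (Ind a i1 * Ind b i2)
  = (cntA u i1 * cntA u i2)%:R / (popsize u * (popsize u).-1)%:R.
Proof.
move=> i12.
have E : forall a b, pairw R u a b * (Ind a i1 * Ind b i2)
   = ((u a)%:R * Ind a i1) * ((u b)%:R * Ind b i2) / (popsize u * (popsize u).-1)%:R.
  move=> a b; case: a => [[ia fa]|]; case: b => [[ib fb]|]; rewrite /Ind /= ?mulr0 ?mul0r ?mulr0 //.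
  case E1: (ia == i1); last by rewrite !mul0r !mulr0 !mul0r.
  case E2: (ib == i2); last by rewrite !mulr0 !mul0r.
  move/eqP: E1 => e1; move/eqP: E2 => e2.
  rewrite /pairw.
  have -> : (Some (ia, fa) == Some (ib, fb)) = false.
    by rewrite eqSome xpair_eqE e1 e2 (negbTE i12).
  by rewrite subn0 natrM; ring.
under eq_bigr => a _ do under eq_bigr => b _ do rewrite E.
rewrite [(cntA u i1 * _)%:R]natrM -(sum_Ind u i1) -(sum_Ind u i2) mulr_suml mulr_suml; apply: eq_bigr => a _.
rewrite mulr_sumr mulr_suml; apply: eq_bigr => b _; ring.
Qed.


Definition gfun {R : realType} (p : R) (n : nat) (j : 'I_3) (T : nat) (u : config) : R :=
  if [&& u None == 0%N, popsize u == n & (T <= n)%N]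
  then hfun p n (cntA u j) T * psi p n (cntA u (ordS j)) T else 0.

Lemma cntA_le (u : config) i : (cntA u i <= popsize u)%N.
Proof.
rewrite popsize_dec (sum3n i) /=.
set a := cntA u i; set b := cntA u (ordS i); set c := cntA u (ord_pred i); lia.
Qed.

Lemma gfun_ge0 {R : realType} (p : R) n j T u : 0 <= p -> 0 <= gfun p n j T u.
Proof.
move=> p0; rewrite /gfun; case: ifP => // _.
by rewrite mulr_ge0 ?hfun_ge0 ?psi_ge0.
Qed.

Lemma gfun_le1 {R : realType} (p : R) n j T u : 0 <= p -> p <= 1 -> gfun p n j T u <= 1.
Proof.
move=> p0 p1; rewrite /gfun; case: ifP => [/and3P [_ /eqP pn Tn]|_]; last by rewrite ler01.
apply: mulr_ile1; rewrite ?hfun_ge0 ?psi_ge0 ?hfun_le1 //.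
by apply: psi_le1 => //; rewrite -pn cntA_le.
Qed.

Lemma gupd_val {R : realType} (p : R) n j T (u : config) ib fb ic fc k' m' :
  u None = 0%N -> popsize u = n -> (T <= n)%N -> (0 < u (Some (ib, fb)))%N ->
  (cntA u j + (ic == j) = k' + (ib == j))%N ->
  (cntA u (ordS j) + (ic == ordS j) = m' + (ib == ordS j))%N ->
  gfun p n j T (upd u (Some (ib, fb)) (Some (ic, fc))) = hfun p n k' T * psi p n m' T.
Proof.
move=> u0 pn Tn ub Hk Hm.
rewrite /gfun upd_None u0 popsize_upd // pn eqxx Tn /=.
have E1 := @cntA_upd u ib fb ic fc j ub; have E2 := @cntA_upd u ib fb ic fc (ordS j) ub.
have -> : cntA (upd u (Some (ib, fb)) (Some (ic, fc))) j = k'.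
  move: E1 Hk; set x := cntA _ j; set y := cntA u j; lia.
have -> : cntA (upd u (Some (ib, fb)) (Some (ic, fc))) (ordS j) = m'.
  move: E2 Hm; set x := cntA _ (ordS j); set y := cntA u (ordS j); lia.
by rewrite eqxx.
Qed.

Lemma rule_w {R : realType} (p : R) a b oc : 0 <= p -> p <= 1 / 2 -> oc \in rule p a b -> 0 <= oc.1.
Proof.
move=> p0 p1; case: a => [[ia fa]|]; case: b => [[ib fb]|] //=; rewrite ?inE.
- case: (ib == ia); first by rewrite inE => /eqP ->.
  case: (ib == ordS ia); first by rewrite inE => /eqP ->.
  rewrite !inE => /orP [] /eqP -> /=; case: fa; lra.
- by move/eqP => ->.
- by move/mapP => [l _ ->] /=; lra.
- by move/eqP => ->.
Qed.

Lemma rule_mono {R : realType} (p : R) a b (f f' : state -> R) : 0 <= p -> p <= 1 / 2 ->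
  (forall c, f c <= f' c) ->
  \sum_(oc <- rule p a b) oc.1 * f oc.2 <= \sum_(oc <- rule p a b) oc.1 * f' oc.2.
Proof.
move=> p0 p1 ff; rewrite big_seq [X in _ <= X]big_seq; apply: ler_sum => oc Hoc.
by apply: ler_wpM2l; [exact: rule_w Hoc | exact: ff].
Qed.

Lemma reach_ge0 {R : realType} (p : R) T u : 0 <= p -> p <= 1 / 2 -> 0 <= reach_prob p T u.
Proof.
move=> p0 p1; elim: T u => [|T IH] u /=; case: ifP => // _.
apply: sumr_ge0 => a _; apply: sumr_ge0 => b _; apply: mulr_ge0; first exact: pairw_ge0.
rewrite big_seq; apply: sumr_ge0 => oc Hoc; apply: mulr_ge0; [exact: rule_w Hoc | exact: IH].
Qed.

Lemma onestep {R : realType} (p : R) n (j : 'I_3) T (u : config) :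
  0 < p -> p <= 1 / 1000 -> (3 <= n)%N -> u None = 0%N -> popsize u = n -> (T < n)%N ->
  (0 < cntA u j)%N ->
  gfun p n j T.+1 u <= \sum_a \sum_b pairw R u a b *
     \sum_(oc <- rule p a b) oc.1 * gfun p n j T (upd u b oc.2).
Proof.
move=> p0 p1 n3 u0 pn Tn kpos.
have p0' : 0 <= p by exact: ltW.
have Tn' : (T <= n)%N by exact: ltnW.
have [SS SP] := I3facts2 j.
set k := cntA u j; set m := cntA u (ordS j); set l := cntA u (ord_pred j).
have kml : (k + m + l = n)%N by rewrite -pn popsize_dec u0 (sum3n j).
set h := hfun p n k T; set hm := hfun p n k.-1 T; set ps := psi p n m T; set psm := psi p n m.-1 T.
set Xa := (hm - h) * ps; set Xb := - (h * ps); set Xc := h * (psm - ps).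
set L := fun a b => p * Xa * (Ind a (ordS j) * Ind b j) + 2 * p * Xb * (Ind a j * Ind b (ord_pred j))
   + 2 * p * Xc * (Ind a (ord_pred j) * Ind b (ordS j)).
have nochange : forall ib fb fc, (0 < u (Some (ib, fb)))%N ->
    gfun p n j T (upd u (Some (ib, fb)) (Some (ib, fc))) = h * ps.
  by move=> ib fb fc ub; apply: gupd_val.
have h0 : 0 <= h by exact: hfun_ge0.
have ps0 : 0 <= ps by exact: psi_ge0.
have step1 : forall a b, pairw R u a b * (h * ps + L a b) <=
    pairw R u a b * \sum_(oc <- rule p a b) oc.1 * gfun p n j T (upd u b oc.2).
  move=> a b; case: (eqVneq (pairw R u a b) 0) => [->|nz]; first by rewrite !mul0r.
  have [ua ub] := @pairw_nz R u a b nz.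
  apply: ler_wpM2l; first exact: pairw_ge0.
  case: a ua {nz} => [[ia fa]|]; last by rewrite u0.
  case: b ub => [[ib fb]|]; last by rewrite u0.
  move=> ub ua; move: ub ua.
  case: (I3cases j ia) => ->; case: (I3cases j ib) => -> ub ua;
    rewrite /L /Ind /rule /= ?SS ?SP ?eqxx ?I3f1 ?I3f2 ?I3f3 ?I3f4 ?I3f5 ?I3f6 !big_cons big_nil /=.
  all: rewrite ?mul0r ?mulr0 ?mul1r ?mulr1 ?addr0 ?add0r.
  all: try (rewrite nochange //; exact: lexx).
  have q1 : p <= (if fa then 2 * p else p) by case: ifP => _; lra.
  have q2 : (if fa then 2 * p else p) <= 2 * p by case: ifP => _; lra.
  set q := (if fa then 2 * p else p) in q1 q2 *.
  rewrite nochange // (@gupd_val R p n j T u _ _ _ _ k.+1 m) //; last first.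
    by rewrite I3f2 I3f6.
    by rewrite eqxx I3f3 addn1 addn0.
  have G0 : 0 <= hfun p n k.+1 T * psi p n m T by rewrite mulr_ge0 ?hfun_ge0 ?psi_ge0.
  rewrite /Xb -/ps.
  set Y := h * ps in G0 *.
  have Y0 : 0 <= Y by rewrite /Y mulr_ge0.
  set G := hfun p n k.+1 T * psi p n m T in G0 *.
  have : 0 <= q * G by rewrite mulr_ge0 //; lra.
  have : 0 <= (2 * p - q) * Y by rewrite mulr_ge0 //; lra.
  lra.
  have q1 : p <= (if fa then 2 * p else p) by case: ifP => _; lra.
  have q2 : (if fa then 2 * p else p) <= 2 * p by case: ifP => _; lra.
  set q := (if fa then 2 * p else p) in q1 q2 *.
  rewrite nochange // (@gupd_val R p n j T u _ _ _ _ k.-1 m.+1) //; last first.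
    by rewrite eqxx I3f2 addn1 addn0.
    by rewrite I3f1 eqxx addn1 addn0 prednK.
  have hmh : h <= hm.
    have Hk : h = hfun p n k.-1.+1 T by rewrite prednK.
    have p1' : p <= 1 by lra.
    rewrite Hk; apply: le_trans (@hfun_le R p n k.-1 T p0' p1' Tn) _.
    rewrite -[X in _ <= X]mul1r; apply: ler_wpM2r; first exact: hfun_ge0.
    apply: gam_le1; lra.
  have ps1 : ps <= psi p n m.+1 T by apply: psi_mono.
  have hm0 : 0 <= hm by exact: hfun_ge0.
  have f1 : q * (hm * ps) <= q * (hfun p n k.-1 T * psi p n m.+1 T).
    by apply: ler_wpM2l; [lra | apply: ler_wpM2l].
  have f2 : 0 <= (q - p) * (hm * ps - h * ps).
    by apply: mulr_ge0; [lra | rewrite subr_ge0; apply: ler_wpM2r].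
  have -> : p * Xa = p * (hm * ps) - p * (h * ps) by rewrite /Xa; ring.
  move: f1 f2; set A := hm * ps; set B := h * ps; set Cp := hfun p n k.-1 T * psi p n m.+1 T.
  move=> f1 f2; lra.
  have q1 : p <= (if fa then 2 * p else p) by case: ifP => _; lra.
  have q2 : (if fa then 2 * p else p) <= 2 * p by case: ifP => _; lra.
  set q := (if fa then 2 * p else p) in q1 q2 *.
  have mpos : (0 < m)%N.
    move: ub; rewrite /m /cntA; case: (fb) => ?; lia.
  rewrite nochange // (@gupd_val R p n j T u _ _ _ _ k m.-1) //; last first.
    by rewrite I3f6 eqxx addn1 addn0 prednK.
    by rewrite I3f3 I3f1.
  have psm1 : psm <= ps by apply: psi_mono; apply: leq_pred.
  have f : 0 <= (2 * p - q) * (h * ps - h * psm).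
    by apply: mulr_ge0; [lra | rewrite subr_ge0; apply: ler_wpM2l].
  have -> : 2 * p * Xc = 2 * p * (h * psm) - 2 * p * (h * ps) by rewrite /Xc; ring.
  move: f; rewrite -/psm; set Y := h * ps; set Z := h * psm => f; lra.
have n2 : (2 <= popsize u)%N by rewrite pn; exact: ltnW.
have step2 : \sum_a \sum_b pairw R u a b * (h * ps + L a b) =
   h * ps + p * Xa * ((m * k)%:R / (n * n.-1)%:R) + 2 * p * Xb * ((k * l)%:R / (n * n.-1)%:R)
   + 2 * p * Xc * ((l * m)%:R / (n * n.-1)%:R).
  have e1 : forall a b, pairw R u a b * (h * ps + L a b) = h * ps * pairw R u a b
     + p * Xa * (pairw R u a b * (Ind a (ordS j) * Ind b j))
     + 2 * p * Xb * (pairw R u a b * (Ind a j * Ind b (ord_pred j)))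
     + 2 * p * Xc * (pairw R u a b * (Ind a (ord_pred j) * Ind b (ordS j))).
    by move=> a b; rewrite /L; ring.
  under eq_bigr => a _ do under eq_bigr => b _ do rewrite e1.
  under eq_bigr => a _ do rewrite !big_split /= -!mulr_sumr.
  by rewrite !big_split /= -!mulr_sumr sum_pairw // !S_pair ?I3f1 ?I3f4 ?I3f6 // pn mulr1.
have gT : gfun p n j T.+1 u = hfun p n k T.+1 * psi p n m T.+1 by rewrite /gfun u0 pn !eqxx Tn.
rewrite gT.
apply: le_trans (@core R p n k m l T p0 p1 n3 kpos kml Tn) _.
apply: le_trans (_ : _ <= \sum_a \sum_b pairw R u a b * (h * ps + L a b)) _; last first.
  by apply: ler_sum => a _; apply: ler_sum => b _; exact: step1.
rewrite step2 [(m * k)%N]mulnC.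
rewrite /Xa /Xb /Xc /h /hm /ps /psm.
rewrite !natrM; generalize (hfun p n k T) (hfun p n k.-1 T) (psi p n m T) (psi p n m.-1 T) (k%:R : R) (l%:R : R) (m%:R : R) (n%:R : R) (n.-1%:R : R) => a b c d e f g N N1.
rewrite le_eqVlt; apply/orP; left; apply/eqP. ring.
Qed.


Lemma amin_pos (u : config) (j : 'I_3) : amin_zero u = false -> (0 < cntA u j)%N.
Proof.
move=> am; rewrite lt0n; apply/negP => /eqP H; move: am; rewrite /amin_zero.
suff -> : [exists i, cntA u i == 0%N] by [].
by apply/existsP; exists j; rewrite H.
Qed.

Lemma g_le_reach {R : realType} (p : R) n (j : 'I_3) T (u : config) :
  0 < p -> p <= 1 / 1000 -> (3 <= n)%N -> gfun p n j T u <= reach_prob p T u.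
Proof.
move=> p0 p1 n3.
have p0' : 0 <= p by exact: ltW.
have p1' : p <= 1 by lra.
have p2 : p <= 1 / 2 by lra.
elim: T u => [|T IH] u.
  rewrite /=; case: ifP => [_|am]; first exact: gfun_le1.
  rewrite /gfun; case: ifP => // _.
  have k0 : cntA u j != 0%N by rewrite -lt0n; apply: amin_pos.
  rewrite /hfun sub0n mul0r expr0n (negbTE k0) mulr0 mul0r; exact: lexx.
rewrite /=; case: ifP => [_|am]; first exact: gfun_le1.
case G: [&& u None == 0%N, popsize u == n & (T.+1 <= n)%N]; last first.
  rewrite /gfun G.
  apply: sumr_ge0 => a _; apply: sumr_ge0 => b _; apply: mulr_ge0; first exact: pairw_ge0.
  rewrite big_seq; apply: sumr_ge0 => oc Hoc; apply: mulr_ge0; [exact: rule_w Hoc | exact: reach_ge0].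
move/and3P: G => [/eqP u0 /eqP pn Tn].
have k0 : (0 < cntA u j)%N by apply: amin_pos.
apply: le_trans (@onestep R p n j T u p0 p1 n3 u0 pn Tn k0) _.
apply: ler_sum => a _; apply: ler_sum => b _; apply: ler_wpM2l; first exact: pairw_ge0.
by apply: (@rule_mono R p a b (fun c => gfun p n j T (upd u b c)) (fun c => reach_prob p T (upd u b c))) => // c; apply: IH.
Qed.

Theorem lemma10 (R : realType) :
  exists p0 : R, 0 < p0 /\
  forall p : R, 0 < p -> p <= p0 ->
  exists (c : R) (C n0 : nat), 0 < c /\
  forall (u : config) (j : 'I_3),
    (n0 <= popsize u)%N ->
    xfrac R u = 0 ->
    afrac R u j <= c6 R u / (popsize u)%:R ->
    sfrac R u / 40 < afrac R u (ordS j) ->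
    c <= reach_prob p (C * popsize u) u.
Proof.
exists (1 / 1000); split; first by rewrite divr_gt0.
move=> p pp p1.
have p0' : 0 <= p by exact: ltW.
have g0 : 0 < gam p by rewrite /gam divr_gt0.
have g1 : gam p / 2 <= 1 by rewrite /gam; lra.
exists ((gam p / 2) ^+ (560 ^ 2) / 160), 1%N, (2 * 560 ^ 2 + 3)%N.
split; first by rewrite divr_gt0 // exprn_gt0 // divr_gt0.
move=> u j nn x0 ha hs.
rewrite mul1n.
set n := popsize u in nn x0 ha hs *.
have n3 : (3 <= n)%N by apply: leq_trans nn; rewrite leq_addl.
have nR0 : 0 < n%:R :> R by rewrite ltr0n; apply: leq_trans n3.
have u0 : u None = 0%N.
  move: x0; rewrite /xfrac -/n => /eqP; rewrite mulf_eq0 invr_eq0 (gt_eqF nR0) orbF.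
  by rewrite pnatr_eq0 => /eqP.
have sum1 : (\sum_(i < 3) cntA u i)%N = n by rewrite /n popsize_dec u0.
have s1 : sfrac R u = 1.
  rewrite /sfrac /afrac -/n -mulr_suml -natr_sum sum1 divff //; exact: lt0r_neq0.
move: ha hs; rewrite /c6 s1 divr1 div1r /afrac -/n => ha hs.
have kK : (cntA u j <= 560 ^ 2)%N.
  move: ha; rewrite ler_pM2r ?invr_gt0 // -natrX ler_nat; exact.
have mn : n%:R / 40 < (cntA u (ordS j))%:R :> R.
  by move: hs; rewrite ltr_pdivlMr // mulrC.
apply: le_trans (@g_le_reach R p n j n u pp p1 n3).
rewrite /gfun u0 /n !eqxx leqnn -/n.
set k := cntA u j in kK *; set m := cntA u (ordS j) in mn *.
apply: ler_pM.
- by rewrite exprn_ge0 // divr_ge0 // ltW.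
- lra.
- rewrite /hfun.
  have k2 : (2 * k <= n)%N.
    apply: leq_trans (_ : 2 * 560 ^ 2 <= n)%N; first by rewrite leq_mul2l kK orbT.
    by apply: leq_trans nn; rewrite leq_addr.
  have kn : (k <= n)%N by apply: leq_trans k2; rewrite leq_pmull.
  have r : 1 / 2 <= (n - k)%:R / n%:R :> R.
    rewrite ler_pdivlMr // natrB //.
    have : (2 * k)%:R <= n%:R :> R by rewrite ler_nat.
    rewrite natrM; lra.
  apply: le_trans (_ : (gam p / 2) ^+ k <= _).
    by apply: ler_wiXn2l => //; rewrite divr_ge0 // ltW.
  rewrite -exprMn; apply: lerXn2r.
  + by rewrite nnegrE divr_ge0 // ltW.
  + by rewrite nnegrE mulr_ge0 ?divr_ge0 // ltW.
  have -> : gam p / 2 = gam p * (1 / 2) by rewrite mul1r.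
  by apply: ler_wpM2l => //; exact: ltW.
- rewrite /psi ler_pdivlMr // le_max; apply/orP; right.
  have : p * n%:R <= 1 / 1000 * n%:R by apply: ler_wpM2r => //; exact: ltW.
  lra.
Qed.
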